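(* Let $\mathbf C$ be an admissible category of lattices and $L$ a convergence $\mathbf C$-object. The map $\epsilon_L:L\to\mathbb P(\mathrm{pt}\,L)$, $\epsilon_L(\ell)=\ell^\bullet$, is a morphism in $\mathbf C^{\mathrm{conv}}$ and is final, i.e. $\lim_{\mathbb P(\mathrm{pt}\,L)}\mathcal F=\epsilon_L(\lim_L\epsilon_L^{-1}(\mathcal F))$ for every filter $\mathcal F$ of subsets of $\mathrm{pt}\,L$.
   Context: A filter on an inf-semilattice $L$ is a non-empty upward-closed subset closed under binary meets ($L$ itself allowed); $\mathbb F L$ is the set of filters. A category of lattices has lattices as objects and morphisms preserving finite suprema and infima; it is admissible if every powerset $\mathbb P(X)$ is an object and there are classes of index sets $\mathcal I,\mathcal J$ such that morphisms $L\to L'$ are exactly monotone maps preserving all existing $I$-indexed infima ($I\in\mathcal I$) and $J$-indexed suprema ($J\in\mathcal J$). A convergence $\mathbf C$-object is $(L,\lim_L)$ with $\lim_L:\mathbb F L\to L$ monotone; morphisms $\varphi:L\to L'$ of $\mathbf C^{\mathrm{conv}}$ are $\mathbf C$-morphisms with $\lim_{L'}\mathcal F\le\varphi(\lim_L\varphi^{-1}(\mathcal F))$ for all $\mathcal F\in\mathbb F L'$. With $\mathbb P(1)=\{\emptyset,\{*\}\}$ and $\lim_{\mathbb P(1)}$ constantly $\{*\}$, $\mathrm{pt}\,L$ is the set of $\mathbf C^{\mathrm{conv}}$-morphisms $L\to\mathbb P(1)$ and $\ell^\bullet=\{\psi\in\mathrm{pt}\,L:\psi(\ell)=\{*\}\}$.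 The powerset $\mathbb P(\mathrm{pt}\,L)$ carries $\lim_{\mathbb P(\mathrm{pt}\,L)}\mathcal F=(\lim_L\{\ell\in L:\ell^\bullet\in\mathcal F\})^\bullet$. *)

(* Defs.v *)
From HB Require Import structures.
From mathcomp Require Import all_boot all_order.
From mathcomp Require Import boolp classical_sets.
Set Implicit Arguments.
Unset Strict Implicit.
Unset Printing Implicit Defensive.
Import Order.TTheory.
Local Open Scope classical_set_scope.
Local Open Scope order_scope.

Section OrderNotions.
Context {d : Order.disp_t} {L : tbLatticeType d}.

Definition is_inf (I : Type) (x : I -> L) (m : L) : Prop :=
  (forall i, m <= x i) /\ (forall y, (forall i, y <= x i) -> y <= m).
Definition is_sup (I : Type) (x : I -> L) (m : L) : Prop :=
  (forall i, x i <= m) /\ (forall y, (forall i, x i <= y) -> m <= y).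

Definition is_lfilter (F : set L) : Prop :=
  (exists l, F l) /\
  (forall a b, F a -> a <= b -> F b) /\
  (forall a b, F a -> F b -> F (Order.meet a b)).

(* a convergence structure: lim : F L -> L monotone.  lim is given as a
   total function on subsets; only its values on filters matter. *)
Definition conv_lim (lim : set L -> L) : Prop :=
  forall F G, is_lfilter F -> is_lfilter G -> F `<=` G -> lim F <= lim G.
End OrderNotions.

Section Maps.
Context {d d' : Order.disp_t} {L : tbLatticeType d} {L' : tbLatticeType d'}.

Definition monotone_map (f : L -> L') : Prop :=
  forall x y, x <= y -> f x <= f y.

Definition preserves_infs (II : Type -> Prop) (f : L -> L') : Prop :=
  forall I : Type, II I -> forall (x : I -> L) m, is_inf x m -> is_inf (f \o x) (f m).
Definition preserves_sups (JJ : Type -> Prop) (f : L -> L') : Prop :=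
  forall J : Type, JJ J -> forall (x : J -> L) m, is_sup x m -> is_sup (f \o x) (f m).

Definition preserves_finite (f : L -> L') : Prop :=
  forall n (x : 'I_n -> L) m,
    (is_inf x m -> is_inf (f \o x) (f m)) /\ (is_sup x m -> is_sup (f \o x) (f m)).

Definition Cmor (II JJ : Type -> Prop) (f : L -> L') : Prop :=
  monotone_map f /\ preserves_infs II f /\ preserves_sups JJ f.

Definition conv_mor (II JJ : Type -> Prop) (lim : set L -> L) (lim' : set L' -> L')
    (f : L -> L') : Prop :=
  Cmor II JJ f /\
  forall F : set L', is_lfilter F -> lim' F <= f (lim (f @^-1` F)).
End Maps.

(* An admissible category of lattices: a class of (bounded) lattices
   containing all powersets, whose morphisms are exactly the monotone maps
   preserving existing II-indexed infima and JJ-indexed suprema; being a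
   category of lattices, these maps preserve finite suprema and infima. *)
Record admissible_cat := AdmissibleCat {
  Obj : forall (d : Order.disp_t), tbLatticeType d -> Prop;
  II : Type -> Prop;
  JJ : Type -> Prop;
  obj_powerset : forall X : Type, Obj (set X);
  mor_finite : forall (d d' : Order.disp_t) (L : tbLatticeType d)
      (L' : tbLatticeType d'), Obj L -> Obj L' ->
      forall f : L -> L', Cmor II JJ f -> preserves_finite f
}.

(* P(1) = set unit, {*} = setT, with lim constantly {*} *)
Definition lim1 : set (set unit) -> set unit := fun _ => setT.

Section Points.
Context (C : admissible_cat) {d : Order.disp_t} {L : tbLatticeType d}
  (lim : set L -> L).

Definition is_pt (psi : L -> set unit) : Prop :=
  conv_mor (II C) (JJ C) lim lim1 psi.

Definition pt : Type := {psi : L -> set unit | is_pt psi}.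

Definition bullet (l : L) : set pt := [set psi : pt | proj1_sig psi l = setT].

Definition limP (F : set (set pt)) : set pt :=
  bullet (lim [set l : L | F (bullet l)]).
End Points.

Arguments is_pt C {d L} lim psi.
Arguments pt C {d L} lim.
Arguments bullet C {d L} lim l.
Arguments limP C {d L} lim F.

(* Main.v *)
Require Import Defs.
From HB Require Import structures.
From mathcomp Require Import all_boot all_order.
From mathcomp Require Import boolp classical_sets.
Local Open Scope classical_set_scope.
Local Open Scope order_scope.
Import Order.TTheory.

Section Aux.
Context (C : admissible_cat) (d : Order.disp_t) (L : tbLatticeType d)
    (lim : set L -> L) (hL : Obj C L).

Lemma unit_setT (A : set unit) : A tt -> A = setT.
Proof. by move=> h; apply/seteqP; split=> // [[]]. Qed.

Lemma pt_mono (psi : pt C lim) a b : a <= b ->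
  proj1_sig psi a `<=` proj1_sig psi b.
Proof.
case: psi => psi [[hm _] _] /= ab; rewrite -subsetEset; exact: hm.
Qed.

Lemma pt_fin (psi : pt C lim) : preserves_finite (proj1_sig psi).
Proof.
case: psi => psi [hc _] /=.
exact: (mor_finite hL (obj_powerset C unit) hc).
Qed.

Lemma pt_top (psi : pt C lim) : proj1_sig psi \top = setT.
Proof.
have [h _] := pt_fin psi 0 (fun i : 'I_0 => \top) \top.
have [_ h2] := h (conj (fun i => lexx _) (fun y _ => lex1 y)).
apply/seteqP; split => //; rewrite -subsetEset; apply: h2.
by case=> [] [].
Qed.

Lemma pt_meet (psi : pt C lim) a b :
  proj1_sig psi a = setT -> proj1_sig psi b = setT -> proj1_sig psi (a `&` b)%O = setT.
Proof.
move=> ha hb.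
pose x := fun i : 'I_2 => if val i == 0%N then a else b.
have hi : is_inf x (a `&` b)%O.
  split.
    by case=> [[|[|n]] p] //=; rewrite /x /= ?leIl ?leIr.
  move=> y hy; rewrite lexI; apply/andP; split.
    exact: (hy (@Ordinal 2 0 erefl)).
  exact: (hy (@Ordinal 2 1 erefl)).
have [h _] := pt_fin psi 2 x (a `&` b)%O.
have [_ h2] := h hi.
apply/seteqP; split => //; rewrite -subsetEset; apply: h2.
by case=> [[|[|n]] p] //=; rewrite /x /= ?ha ?hb.
Qed.

Lemma bullet_filter (F : set (set (pt C lim))) : is_lfilter F ->
  is_lfilter (bullet C lim @^-1` F).
Proof.
move=> [[a Fa] [Fup Fmeet]]; split; last split.
- exists \top; rewrite /preimage /=.
  have -> : bullet C lim \top = setT.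
    by apply/seteqP; split => // psi _; rewrite /bullet /= pt_top.
  by apply: (Fup a) => //; rewrite subsetEset.
- move=> u v Fu uv; apply: (Fup _ _ Fu); rewrite subsetEset => psi.
  rewrite /bullet /= => hu; apply/seteqP; split => //; rewrite -hu.
  exact: pt_mono.
- move=> u v Fu Fv; apply: (Fup _ _ (Fmeet _ _ Fu Fv)).
  rewrite subsetEset => psi [hu hv]; exact: pt_meet.
Qed.

End Aux.

Theorem mainTheorem5 (C : admissible_cat) (d : Order.disp_t) (L : tbLatticeType d)
    (lim : set L -> L) (hL : Obj C L) (hlim : conv_lim lim) :
  conv_lim (limP C lim) /\
  conv_mor (II C) (JJ C) lim (limP C lim) (bullet C lim) /\
  (forall F : set (set (pt C lim)), is_lfilter F ->
     limP C lim F = bullet C lim (lim (bullet C lim @^-1` F))).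
Proof.
have bmono : forall a b, a <= b -> bullet C lim a `<=` bullet C lim b.
  move=> a b ab psi; rewrite /bullet /= => h; apply/seteqP; split => //.
  by rewrite -h; apply: pt_mono.
split; last split; last by [].
- move=> F G hF hG FG; rewrite subsetEset; apply: bmono.
  apply: hlim; try exact: bullet_filter.
  by move=> l; apply: FG.
split; last by move=> F _; rewrite subsetEset.
split; last split.
- by move=> a b ab; rewrite subsetEset; apply: bmono.
- move=> I hI x m [h1 h2]; split.
    by move=> i; rewrite subsetEset; apply: bmono.
  move=> y hy; rewrite subsetEset => psi ypsi.
  have hyi : forall i, proj1_sig psi (x i) = setT.
    by move=> i; have := hy i; rewrite subsetEset => /(_ psi ypsi).
  case: (psi) hyi => f [[fm [fi fs]] fl] /= hyi.
  have := fi I hI x m (conj h1 h2) => -[_ g2].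
  rewrite /bullet /=; apply/seteqP; split => //; rewrite -subsetEset; apply: g2.
  by move=> i /=; rewrite hyi.
- move=> I hI x m [h1 h2]; split.
    by move=> i; rewrite subsetEset; apply: bmono.
  move=> y hy; rewrite subsetEset => psi; rewrite /bullet /= => pm.
  apply: contrapT => ny.
  case: (psi) pm ny => f [[fm [fi fs]] fl] /= pm ny.
  have := fs I hI x m (conj h1 h2) => -[_ g2].
  have : f m `<=` set0.
    rewrite -subsetEset; apply: g2 => i; rewrite subsetEset => -[] fxi.
    apply: ny; have := hy i; rewrite subsetEset; apply.
    by rewrite /bullet /=; apply: unit_setT.
  by rewrite pm => /(_ tt Logic.I).
Qed.
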